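(* There is an absolute constant $C>0$ such that the following holds. Fix any $k\ge1$, any collection of $k$ groups with values in $[0,1]$, any target $q\in(0,1)$ and any step size $\eta\in(0,1]$. Running the Group Conditional ACI algorithm for $T$ rounds on any adversarial sequence $g_t\in[0,1]^k$, $\tau_t\in[0,1]$ yields, for every $i\in[k]$ with $T_i>0$, $$\left|\mathrm{Cov}(\Pi_T,G_i)-q\right|\le C\,\frac{\sqrt{\eta T(\eta k+1)}}{T_i\,\eta}.$$
   Context: Group Conditional ACI (GCACI) with coverage target $q$ and step size $\eta$: set $\theta_1=0\in\mathbb{R}^k$; at each round $t=1,\dots,T$ receive $g_t\in[0,1]^k$, predict $\hat\tau_t=\langle\theta_t,g_t\rangle$, receive $\tau_t\in[0,1]$; if $\hat\tau_t<\tau_t$ set $\theta_{t+1}=\theta_t+\eta q\,g_t$ (Update A), otherwise set $\theta_{t+1}=\theta_t-\eta(1-q)\,g_t$ (Update B). Here $g_{t,i}$ is the membership of round $t$ in group $G_i$; $T_i=\sum_{t=1}^T g_{t,i}$ and $\mathrm{Cov}(\Pi_T,G_i)=\frac{1}{T_i}\sum_{t=1}^T\mathbf{1}[\hat\tau_t\ge\tau_t]\,g_{t,i}$. *)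

(* Defs.v *)
From mathcomp Require Import all_boot all_order all_algebra.
Set Implicit Arguments. Unset Strict Implicit. Unset Printing Implicit Defensive.
Import Order.TTheory GRing.Theory Num.Theory.
Local Open Scope ring_scope.

(* Group Conditional ACI.  Rounds are indexed t = 0, ..., T-1 (paper: 1..T).
   g t : group membership vector of round t, tau t : realized score. *)

Section GCACI.
Variables (R : realFieldType) (k : nat) (q eta : R)
          (g : nat -> 'I_k -> R) (tau : nat -> R).

Definition gcaci_pred (th : {ffun 'I_k -> R}) (t : nat) : R :=
  \sum_(i < k) th i * g t i.

Fixpoint gcaci_theta (t : nat) : {ffun 'I_k -> R} :=
  match t with
  | 0 => [ffun _ => 0]
  | t'.+1 =>
      let th := gcaci_theta t' in
      if gcaci_pred th t' < tau t'
      then [ffun i => th i + eta * q * g t' i]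
      else [ffun i => th i - eta * (1 - q) * g t' i]
  end.

Definition gcaci_tauhat (t : nat) : R := gcaci_pred (gcaci_theta t) t.

Definition group_size (T : nat) (i : 'I_k) : R := \sum_(t < T) g t i.

Definition gcaci_cov (T : nat) (i : 'I_k) : R :=
  (group_size T i)^-1 *
  \sum_(t < T) (if tau t <= gcaci_tauhat t then 1 else 0) * g t i.
End GCACI.

(* Main.v *)
Require Import Defs.
From mathcomp Require Import all_boot all_order all_algebra.
From mathcomp Require Import reals.
From mathcomp Require Import ring lra.
Import Order.TTheory GRing.Theory Num.Theory.
Local Open Scope ring_scope.

Section Aux.
Variables (R : realType) (k : nat) (q eta : R) (g : nat -> 'I_k -> R) (tau : nat -> R).

Lemma theta_sum T i : gcaci_theta q eta g tau T i =
  eta * (q * group_size g T i -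
    \sum_(t < T) (if tau t <= gcaci_tauhat q eta g tau t then 1 else 0) * g t i).
Proof.
elim: T => [|T IH]; first by rewrite /group_size !big_ord0 ffunE; ring.
rewrite /group_size !big_ord_recr /= -/(group_size g T i).
rewrite /gcaci_tauhat /=.
case: ltP => H; rewrite ffunE IH /gcaci_tauhat; ring.
Qed.

Lemma sum_sq_step (th : 'I_k -> R) (a : R) t :
  \sum_(j < k) (th j + a * g t j) ^+ 2 =
  \sum_(j < k) th j ^+ 2 + 2 * a * (\sum_(j < k) th j * g t j)
    + a ^+ 2 * \sum_(j < k) g t j ^+ 2.
Proof.
rewrite !mulr_sumr -!big_split /=; apply: eq_bigr => j _; ring.
Qed.

Hypotheses (hq : 0 < q < 1) (he : 0 < eta <= 1)
  (hg : forall t i, 0 <= g t i <= 1) (ht : forall t, 0 <= tau t <= 1).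

Lemma sumg2 t : \sum_(j < k) g t j ^+ 2 <= k%:R.
Proof.
rewrite -[k in k%:R]card_ord -sumr_const.
apply: ler_sum => j _; have := hg t j; case/andP=> a b; nra.
Qed.

Lemma norm_bound T : \sum_(j < k) gcaci_theta q eta g tau T j ^+ 2
   <= T%:R * (2 * eta + eta ^+ 2 * k%:R).
Proof.
elim: T => [|T IH].
  by rewrite big1 ?mul0r // => j _; rewrite ffunE expr0n.
have hk := sumg2 T.
have hgs : 0 <= \sum_(j < k) g T j ^+ 2 by apply: sumr_ge0 => j _; apply: sqr_ge0.
have := ht T; case/andP => t0 t1.
case/andP: hq => q0 q1; case/andP: he => e0 e1.
rewrite /= -natr1.
case: ltP => H.
- under eq_bigr do rewrite ffunE.
  rewrite (sum_sq_step (gcaci_theta q eta g tau T)) -/(gcaci_pred _ _ _) -/(gcaci_pred _ _ _).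
  set p := gcaci_pred _ _ T in H *.
  set S := \sum_(j < k) g T j ^+ 2 in hk hgs *.
  have hqp : q * p <= q by nra.
  have h1 : eta * q * p <= eta by have := ler_wpM2l (ltW e0) hqp; have := ler_wpM2l (ltW e0) (ltW q1); rewrite mulr1 -mulrA; lra.
  have h2 : (eta * q) ^+ 2 * S <= eta ^+ 2 * k%:R.
    have heq : eta * q <= eta by have := ler_wpM2l (ltW e0) (ltW q1); rewrite mulr1.
    have heq0 : 0 <= eta * q by rewrite mulr_ge0 ?ltW.
    apply: ler_pM => //; first by apply: sqr_ge0.
    by rewrite !expr2; apply: ler_pM.
  lra.
- under eq_bigr do rewrite ffunE -mulNr.
  rewrite (sum_sq_step (gcaci_theta q eta g tau T)) -/(gcaci_pred _ _ _).
  set p := gcaci_pred _ _ T in H *.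
  set S := \sum_(j < k) g T j ^+ 2 in hk hgs *.
  have h1 : - (eta * (1 - q)) * p <= 0.
    have hp : 0 <= p by lra. have hq1 : 0 <= eta * (1 - q) by rewrite mulr_ge0 ?ltW //; lra.
    by rewrite mulNr oppr_le0 mulr_ge0.
  have h2 : (- (eta * (1 - q))) ^+ 2 * S <= eta ^+ 2 * k%:R.
    have heq : eta * (1 - q) <= eta by have := ler_wpM2l (ltW e0) (_ : 1 - q <= 1); rewrite mulr1; apply; lra.
    have heq0 : 0 <= eta * (1 - q) by rewrite mulr_ge0 ?ltW //; lra.
    apply: ler_pM => //; first by apply: sqr_ge0.
    by rewrite sqrrN !expr2; apply: ler_pM.
  lra.
Qed.
End Aux.

Theorem mainTheorem10 (R : realType) :
  exists C : R, 0 < C /\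
  forall (k : nat) (q eta : R) (T : nat)
         (g : nat -> 'I_k -> R) (tau : nat -> R),
    (1 <= k)%N ->
    0 < q < 1 ->
    0 < eta <= 1 ->
    (forall t i, 0 <= g t i <= 1) ->
    (forall t, 0 <= tau t <= 1) ->
    forall i : 'I_k, 0 < group_size g T i ->
      `| gcaci_cov q eta g tau T i - q |
        <= C * Num.sqrt (eta * T%:R * (eta * k%:R + 1))
             / (group_size g T i * eta).
Proof.
exists 2; split => // k q eta T g tau hk hq he hg ht i hTi.
have hth := @theta_sum R k q eta g tau T i.
have hnb := @norm_bound R k q eta g tau hq he hg ht T.
set th := gcaci_theta q eta g tau T in hth hnb.
set Ti := group_size g T i in hTi hth *.
set S := \sum_(t < T) _ in hth.
case/andP: he => e0 e1.
have hcov : gcaci_cov q eta g tau T i - q = - th i / (Ti * eta).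
  rewrite /gcaci_cov -/Ti -/S hth; field.
  by rewrite !gt_eqF.
have hz : 0 < (Ti * eta)^-1 by rewrite invr_gt0 mulr_gt0.
rewrite hcov normrM normrN (ger0_norm (ltW hz)) ler_pM2r //.
set X := eta * T%:R * (eta * k%:R + 1).
have hX : 0 <= X.
  have : 0 <= T%:R :> R by []. have : 0 <= k%:R :> R by [].
  move=> hk0 hT0; rewrite /X mulr_ge0 // ?mulr_ge0 // ?addr_ge0 // ?mulr_ge0 //; exact: ltW.
have hi : th i ^+ 2 <= \sum_(j < k) th j ^+ 2.
  rewrite (bigD1 i) //= lerDl; apply: sumr_ge0 => j _; apply: sqr_ge0.
have h4 : th i ^+ 2 <= 4 * X.
  apply: (le_trans hi); apply: (le_trans hnb); rewrite /X.
  have hk0 : 0 <= k%:R :> R by [].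
  have hT0 : 0 <= T%:R :> R by [].
  rewrite -subr_ge0.
  have -> : 4 * (eta * T%:R * (eta * k%:R + 1)) - T%:R * (2 * eta + eta ^+ 2 * k%:R)
    = (eta * T%:R) * (3 * eta * k%:R + 2) by ring.
  rewrite mulr_ge0 ?mulr_ge0 ?addr_ge0 ?mulr_ge0 //; exact: ltW.
have e2 : Num.sqrt (4:R) = 2.
  have e4 : (4:R) = 2 ^+ 2 by rewrite expr2 -natrM.
  by rewrite e4 sqrtr_sqr ger0_norm // ler0n.
rewrite -sqrtr_sqr -e2 -sqrtrM //.
by apply: ler_wsqrtr.
Qed.
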